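(* Let $P$ be a finite graded bowtie-free poset of rank $n$ with $\hat0,\hat1$ and a good $\mathcal{H}_n(0)$ action $U_1,\dots,U_{n-1}$, and for each maximal chain $\mathfrak m$ let $\omega_{\mathfrak m}$ be as defined below. Then: (a) if $U_{i_1}\cdots U_{i_r}(\mathfrak m)=\mathfrak m_0$ is restless, then $s_{i_1}\cdots s_{i_r}$ is a reduced expression for $\omega_{\mathfrak m}$, and conversely for every reduced expression $\omega_{\mathfrak m}=s_{j_1}\cdots s_{j_r}$ the expression $U_{j_1}\cdots U_{j_r}(\mathfrak m)=\mathfrak m_0$ is restless; (b) for $i\in[n-1]$, the permutation $\omega_{\mathfrak m}$ has a descent at $i$ if and only if $U_i(\mathfrak m)\ne\mathfrak m$, and in that case $\omega_{U_i(\mathfrak m)}=\omega_{\mathfrak m}s_i$.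
   Context: $s_i$ is the adjacent transposition $(i\ i+1)$; permutations compose right to left; a permutation $\omega$ has a descent at $i$ if $\omega(i)>\omega(i+1)$. Bowtie-free: no distinct $a,b,c,d$ with $a$ and $b$ each covering both $c$ and $d$. A good $\mathcal{H}_n(0)$ action is a family $U_1,\dots,U_{n-1}$ of maps on the set $\mathcal{M}(P)$ of maximal chains with: $U_i(\mathfrak m)$ agrees with $\mathfrak m$ except possibly at rank $i$; $U_i^2=U_i$; $U_iU_j=U_jU_i$ for $|i-j|\ge2$; $U_iU_{i+1}U_i=U_{i+1}U_iU_{i+1}$; and $\omega F_P=\mathrm{ch}(\chi_P)$ ($\chi_P$ the character of the $\mathcal{H}_n(0)$-module $\mathbb{C}\mathcal{M}(P)$ with $T_i=-U_i$, $F_P$ Ehrenborg's flag quasisymmetric function, $\omega(L_{S,n})=L_{[n-1]\setminus S,n}$, $\mathrm{ch}(\chi_S)=L_{S,n}$ for the one-dimensional characters $\chi_S$). An expression $U_{i_1}\cdots U_{i_r}(\mathfrak m)=\mathfrak m'$ is restless if each successive application of $U_{i_r},U_{i_{r-1}},\dots,U_{i_1}$ changes the chain. Facts from the paper: $P$ has a unique maximal chain $\mathfrak m_0$ with $U_i(\mathfrak m_0)=\mathfrak m_0$ for all $i$; for every maximal chain $\mathfrak m$ there is a restless expression $U_{i_1}\cdots U_{i_r}(\mathfrak m)=\mathfrak m_0$; and the permutation $s_{i_1}\cdots s_{i_r}$ does not depend on the choice of restless expression. This permutation is denoted $\omega_{\mathfrak m}$. *)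

(* Defs.v *)
From HB Require Import structures.
From mathcomp Require Import all_boot all_order all_fingroup all_algebra.
Set Implicit Arguments. Unset Strict Implicit. Unset Printing Implicit Defensive.
Import Order.TTheory GRing.Theory.

Local Open Scope order_scope.

Section Poset.
Variables (d : Order.disp_t) (P : finTBPOrderType d).

Definition covers (x y : P) : bool :=
  (x < y) && [forall z : P, ~~ ((x < z) && (z < y))].

Definition graded (rk : P -> nat) (n : nat) : Prop :=
  [/\ rk \bot = 0%N, rk \top = n & forall x y : P, covers x y -> rk y = (rk x).+1].

Definition bowtie_free : Prop :=
  ~ exists a b c e : P,
      [/\ uniq [:: a; b; c; e],
          covers c a /\ covers e a & covers c b /\ covers e b].

Definition is_chain (C : {set P}) : bool :=
  [forall x in C, forall y in C, (x <= y) || (y <= x)].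

Definition is_maxchain (C : {set P}) : bool :=
  is_chain C && [forall D : {set P}, (is_chain D && (C \subset D)) ==> (D == C)].

Definition mchain := {C : {set P} | is_maxchain C}.

End Poset.

Local Open Scope nat_scope.

Definition word (n : nat) (w : seq nat) : bool := all (fun i => 0 < i < n) w.

(* adjacent transposition s_i = (i i+1) of {1..n}, encoded on 'I_n = {0..n-1}
   as the transposition of i-1 and i *)
Definition s_ (n i : nat) : 'S_n :=
  match @insub _ (fun k => k < n) _ i.-1, @insub _ (fun k => k < n) _ i with
  | Some a, Some b => tperm (a : 'I_n) b
  | _, _ => 1%g
  end.

(* s_{i1} ... s_{ir}, composed right to left as functions:
   (perm_of_word n w) x = s_{i1} (s_{i2} ( ... (s_{ir} x))). *)
Definition perm_of_word (n : nat) (w : seq nat) : 'S_n :=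
  foldr (fun i p => (p * s_ n i)%g) 1%g w.

Definition reduced (n : nat) (w : seq nat) : Prop :=
  word n w /\ forall w', word n w' -> perm_of_word n w' = perm_of_word n w ->
                         size w <= size w'.

(* omega has a descent at i (1-indexed): omega(i) > omega(i+1) *)
Definition descent (n : nat) (om : 'S_n) (i : nat) : bool :=
  match @insub _ (fun k => k < n) _ i.-1, @insub _ (fun k => k < n) _ i with
  | Some a, Some b => (val (om b) < val (om (a : 'I_n)))
  | _, _ => false
  end.

Section Action.
Variables (X : finType).

Definition applyU (U : nat -> X -> X) (w : seq nat) (m : X) : X :=
  foldr (fun i x => U i x) m w.

Fixpoint restless_rev (U : nat -> X -> X) (ws : seq nat) (m m' : X) : bool :=
  match ws with
  | [::] => m == m'
  | j :: ws' => (U j m != m) && restless_rev U ws' (U j m) m'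
  end.

(* U_{i1}...U_{ir}(m) = m' is restless: U_{ir}, then U_{i(r-1)}, ..., U_{i1} each
   change the chain *)
Definition restless (U : nat -> X -> X) (w : seq nat) (m m' : X) : bool :=
  restless_rev U (rev w) m m'.

End Action.

Local Open Scope ring_scope.

(* subsets of [n-1]: k : 'I_n.-1 stands for the integer k+1 *)
Definition memS (n : nat) (S : {set 'I_n.-1}) (i : nat) : bool :=
  [exists k in S, ((k : nat).+1 == i)%N].

(* one-dimensional character chi_S of H_n(0): T_i |-> -1 if i in S, 0 otherwise;
   evaluated at T_{i1} ... T_{ir} *)
Definition chi (n : nat) (S : {set 'I_n.-1}) (w : seq nat) : int :=
  \prod_(i <- w) (if memS S i then -1 else 0).

(* character chi_P of C M(P) with T_i = - U_i, evaluated at T_{i1}...T_{ir}: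
   the trace of (-U_{i1})...(-U_{ir}) on the permutation-like module C M(P) *)
Definition charP (X : finType) (U : nat -> X -> X) (w : seq nat) : int :=
  (-1) ^+ size w * (#|[set m | applyU U w m == m]|)%:Z.

(* degree-n quasisymmetric functions, as coordinate vectors in the monomial
   basis M_S, S subset of [n-1] *)
Notation qsym n := {ffun {set 'I_n.-1} -> int}.
Definition Mq (n : nat) (S : {set 'I_n.-1}) : qsym n := [ffun T : {set 'I_n.-1} => (S == T)%:Z].
Definition Lq (n : nat) (S : {set 'I_n.-1}) : qsym n := [ffun T : {set 'I_n.-1} => (S \subset T)%:Z].

Definition rankset d (P : finTBPOrderType d) (rk : P -> nat) (n : nat)
  (C : {set P}) : {set 'I_n.-1} :=
  [set k : 'I_n.-1 | [exists x in C, rk x == (k : nat).+1]].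

Definition flagF d (P : finTBPOrderType d) (rk : P -> nat) (n : nat) : qsym n :=
  \sum_(C : {set P} | [&& is_chain C, \bot \in C & \top \in C]) Mq (rankset rk n C).

(* omega F_P = ch(chi_P): writing F_P = sum_S b_S L_S, we have
   omega F_P = sum_S b_S L_{[n-1]\S}, and ch is the linear isomorphism with
   ch(chi_S) = L_S, so the condition says chi_P = sum_S b_S chi_{[n-1]\S}
   (as functions on H_n(0), i.e. on all products T_{i1}...T_{ir}). *)
Definition char_condition d (P : finTBPOrderType d) (rk : P -> nat) (n : nat)
  (U : nat -> mchain P -> mchain P) : Prop :=
  exists b : {set 'I_n.-1} -> int,
    (forall T, flagF rk n T = \sum_S b S * Lq S T) /\
    forall w, word n w -> charP U w = \sum_S b S * chi (~: S) w.

Definition good_action d (P : finTBPOrderType d) (rk : P -> nat) (n : nat)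
  (U : nat -> mchain P -> mchain P) : Prop :=
  [/\ (forall i m, (0 < i < n)%N ->
         [set x in val (U i m) | rk x != i] = [set x in val m | rk x != i]),
      (forall i m, (0 < i < n)%N -> U i (U i m) = U i m),
      (forall i j m, (0 < i < n)%N -> (0 < j < n)%N -> (i.+1 < j \/ j.+1 < i)%N ->
         U i (U j m) = U j (U i m)),
      (forall i m, (0 < i)%N -> (i.+1 < n)%N ->
         U i (U i.+1 (U i m)) = U i.+1 (U i (U i.+1 m)))
    & char_condition rk n U].

(* Main.v *)
Require Import Defs.
From HB Require Import structures.
From mathcomp Require Import all_boot all_order all_fingroup all_algebra.
From mathcomp Require Import zify.
Set Implicit Arguments. Unset Strict Implicit. Unset Printing Implicit Defensive.
Local Open Scope nat_scope.

Definition inv n (s : 'S_n) : nat :=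
  #|[set p : 'I_n * 'I_n | (p.1 < p.2) && (s p.2 < s p.1)]|.

Lemma tpermv n (a b x : 'I_n) :
  nat_of_ord (tperm a b x) = if nat_of_ord x == a then nat_of_ord b
     else if nat_of_ord x == b then nat_of_ord a else nat_of_ord x.
Proof.
case: tpermP => [->|->|H1 H2]; rewrite ?eqxx //.
  by case: eqP => // /val_inj ->.
by move/eqP: H1; move/eqP: H2; rewrite -!val_eqE => /negbTE -> /negbTE ->.
Qed.

Lemma tlt n (a b : 'I_n) (Hab : nat_of_ord b = (nat_of_ord a).+1) u v :
  (u,v) != (a,b) -> (u,v) != (b,a) -> (tperm a b u < tperm a b v) = (u < v).
Proof.
rewrite !xpair_eqE -!val_eqE /= => H1 H2.
rewrite !tpermv.
move: H1 H2; case: (nat_of_ord u =P a) => ?; case: (nat_of_ord u =P b) => ?;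
  case: (nat_of_ord v =P a) => ?; case: (nat_of_ord v =P b) => ? //= _ _; lia.
Qed.

Lemma inv_up n (a b : 'I_n) (Hab : nat_of_ord b = (nat_of_ord a).+1) (s : 'S_n) :
  s a < s b -> inv (tperm a b * s)%g = (inv s).+1.
Proof.
move=> Hs; rewrite /inv.
set t := tperm a b.
pose f := fun p : 'I_n * 'I_n => (t p.1, t p.2).
have finj : injective f by move=> [x y] [x' y'] [] /perm_inj -> /perm_inj ->.
have -> : [set p : 'I_n * 'I_n | (p.1 < p.2) && ((t * s)%g p.2 < (t * s)%g p.1)] =
   f @^-1: [set p : 'I_n * 'I_n | (t p.1 < t p.2) && (s p.2 < s p.1)].
  by apply/setP => [[x y]]; rewrite !inE /= !permM /t !tpermK.
rewrite card_preimset //.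
have -> : [set p : 'I_n * 'I_n | (t p.1 < t p.2) && (s p.2 < s p.1)] =
   (b, a) |: [set p : 'I_n * 'I_n | (p.1 < p.2) && (s p.2 < s p.1)].
  apply/setP => [[x y]]; rewrite !inE /=.
  have [E|N1] := eqVneq (x, y) (b, a).
    by case: E => -> ->; rewrite /t tpermL tpermR Hs Hab leqnn.
  have [E|N2] := eqVneq (x, y) (a, b).
    case: E => -> ->; rewrite /t tpermL tpermR Hab /=.
    by rewrite [s b < s a]ltnNge (ltnW Hs) !andbF.
  by rewrite /t tlt.
rewrite cardsU1 inE /= Hab.
by rewrite ltnNge leqW.
Qed.

Lemma inv_down n (a b : 'I_n) (Hab : nat_of_ord b = (nat_of_ord a).+1) (s : 'S_n) :
  s b < s a -> inv s = (inv (tperm a b * s)%g).+1.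
Proof.
move=> Hs.
have E : s = (tperm a b * (tperm a b * s))%g by rewrite mulgA tperm2 mul1g.
rewrite {1}E inv_up //.
by rewrite !permM tpermL tpermR.
Qed.

Lemma perm_lt_or n (s : 'S_n) (a b : 'I_n) : nat_of_ord a != b -> (s a < s b) || (s b < s a).
Proof.
move=> H; case: ltngtP => // /val_inj /perm_inj E.
by rewrite E eqxx in H.
Qed.

Lemma s_E n i (a b : 'I_n) : nat_of_ord a = i.-1 -> nat_of_ord b = i -> s_ n i = tperm a b.
Proof.
move=> Ha Hb; rewrite /s_.
case: insubP => [a' _ Ea|]; last by rewrite -Ha ltn_ord.
case: insubP => [b' _ Eb|]; last by rewrite -Hb ltn_ord.
by congr tperm; apply: val_inj => /=; rewrite ?Ea ?Eb.
Qed.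

Lemma descentE n (om : 'S_n) i (a b : 'I_n) : nat_of_ord a = i.-1 -> nat_of_ord b = i ->
  descent om i = (om b < om a).
Proof.
move=> Ha Hb; rewrite /descent.
case: insubP => [a' _ Ea|]; last by rewrite -Ha ltn_ord.
case: insubP => [b' _ Eb|]; last by rewrite -Hb ltn_ord.
have -> : a' = a by apply: val_inj; rewrite Ea.
by have -> : b' = b by apply: val_inj; move: Eb; rewrite /= => ->.
Qed.

Lemma ab_ex n i : 0 < i < n -> exists a b : 'I_n, nat_of_ord a = i.-1 /\ nat_of_ord b = i.
Proof.
case/andP=> H0 Hn.
have Ha : i.-1 < n by lia.
by exists (Ordinal Ha), (Ordinal Hn).
Qed.

Lemma foldr_perm n p w :
  foldr (fun i p => (p * s_ n i)%g) p w = (p * perm_of_word n w)%g.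
Proof.
elim: w => [|i w IH] /=; first by rewrite mulg1.
by rewrite IH mulgA.
Qed.

Lemma perm_rcons n w i : perm_of_word n (rcons w i) = (s_ n i * perm_of_word n w)%g.
Proof. by rewrite {1}/perm_of_word foldr_rcons /= mul1g foldr_perm. Qed.

Lemma word_rcons n w i : word n (rcons w i) = word n w && (0 < i < n).
Proof. by rewrite /word all_rcons andbC. Qed.

Lemma inv1 n : inv (1 : 'S_n)%g = 0.
Proof.
apply/eqP; rewrite /inv cards_eq0; apply/eqP/setP=> [[x y]].
rewrite !inE /= !perm1; case: (ltnP x y) => //= /ltnW.
by rewrite leqNgt => /negbTE.
Qed.

Lemma inv_le n w : word n w -> inv (perm_of_word n w) <= size w.
Proof.
elim/last_ind: w => [|w i IH]; first by rewrite /perm_of_word /= inv1.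
rewrite word_rcons => /andP[Hw Hi].
have [a [b [Ha Hb]]] := ab_ex Hi.
have Hab : nat_of_ord b = (nat_of_ord a).+1 by lia.
rewrite perm_rcons (s_E Ha Hb) size_rcons.
have := IH Hw.
have : nat_of_ord a != b by rewrite Hab; lia.
move/(perm_lt_or (perm_of_word n w)) => /orP[H|H].
  by rewrite inv_up.
by rewrite (inv_down Hab H) => /ltnW /leqW.
Qed.

Lemma mono_ge n (f : 'S_n) : (forall u v : 'I_n, u < v -> f u < f v) ->
  forall k : 'I_n, k <= f k.
Proof.
move=> Hm k; case: k => m Hm'.
elim: m Hm' => [|m IH] Hm' //=.
have H1 : m < n by lia.
have := IH H1; have := Hm (Ordinal H1) (Ordinal Hm') (ltnSn m).
rewrite /=; lia.
Qed.

Lemma inv0_id n (s : 'S_n) : inv s = 0 -> s = 1%g.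
Proof.
move=> /eqP; rewrite cards_eq0 => /eqP E.
have Hm : forall u v : 'I_n, u < v -> s u < s v.
  move=> u v Huv.
  have : (u, v) \notin [set p : 'I_n * 'I_n | (p.1 < p.2) && (s p.2 < s p.1)] by rewrite E inE.
  rewrite inE /= Huv /= => Hn.
  have : nat_of_ord u != v by rewrite neq_ltn Huv.
  by move/(perm_lt_or s)=> /orP[] // H; rewrite H in Hn.
have Hmi : forall u v : 'I_n, u < v -> (s^-1)%g u < (s^-1)%g v.
  move=> u v Huv.
  have : nat_of_ord ((s^-1)%g u) != (s^-1)%g v.
    by rewrite val_eqE (inj_eq (@perm_inj _ _)) -val_eqE neq_ltn Huv.
  case: ltngtP => // H _.
  by have := Hm _ _ H; rewrite !permKV => /(ltn_trans Huv); rewrite ltnn.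
apply/permP => k; rewrite perm1; apply: val_inj.
have H1 := mono_ge Hm k.
have := mono_ge Hmi (s k); rewrite permK => H2.
by apply/eqP; rewrite eqn_leq H1 H2.
Qed.

Lemma adj_desc n (s : 'S_n) : 0 < inv s ->
  exists a b : 'I_n, nat_of_ord b = (nat_of_ord a).+1 /\ s b < s a.
Proof.
move=> Hpos.
case: (boolP [exists a : 'I_n, exists b : 'I_n, (nat_of_ord b == (nat_of_ord a).+1) && (s b < s a)]).
  by move=> /fintype.existsP[a /fintype.existsP[b /andP[/eqP H1 H2]]]; exists a, b.
rewrite negb_exists => /forallP Hn.
have Hadj : forall a b : 'I_n, nat_of_ord b = (nat_of_ord a).+1 -> s a < s b.
  move=> a b Hab; have := Hn a; rewrite negb_exists => /forallP /(_ b).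
  rewrite Hab eqxx /= => H.
  have : nat_of_ord a != b by rewrite Hab; lia.
  by move/(perm_lt_or s) => /orP[] // H'; rewrite H' in H.
have Hm : forall d (u v : 'I_n), nat_of_ord v = u + d.+1 -> s u < s v.
  elim=> [|d IH] u v Huv; first by apply: Hadj; lia.
  have Hw : u + d.+1 < n by have := ltn_ord v; lia.
  apply: (ltn_trans (IH u (Ordinal Hw) erefl)).
  by apply: Hadj => /=; lia.
move: Hpos; rewrite lt0n cards_eq0 => /set0Pn [[u v]].
rewrite inE /= => /andP[Huv Hs].
have : v = u + (v - u.+1).+1 :> nat by lia.
by move/Hm => H; have := ltn_trans H Hs; rewrite ltnn.
Qed.

Lemma red_ex n (s : 'S_n) : exists w, [/\ word n w, perm_of_word n w = s & size w = inv s].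
Proof.
move: {2}(inv s) (erefl (inv s)) => k; elim: k s => [|k IH] s Hk.
  by exists [::]; rewrite Hk (inv0_id Hk).
have [a [b [Hab Hs]]] : exists a b : 'I_n, nat_of_ord b = (nat_of_ord a).+1 /\ s b < s a.
  by apply: adj_desc; rewrite Hk.
have := inv_down Hab Hs; rewrite Hk => /eqP; rewrite eqSS => /eqP /esym Hk'.
have [w [Hw Hp Hsz]] := IH _ Hk'.
have Hi : 0 < b < n by apply/andP; split; [rewrite Hab | apply: ltn_ord].
exists (rcons w b); split.
- by rewrite word_rcons Hw Hi.
- rewrite perm_rcons Hp (s_E (a:=a) (b:=b)) ?Hab //.
  by rewrite mulgA tperm2 mul1g.
- by rewrite size_rcons Hsz Hk'.
Qed.

Lemma tperm_braid (T : finType) (a b c : T) : a != b -> a != c -> b != c ->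
  (tperm a b * tperm b c * tperm a b)%g = (tperm b c * tperm a b * tperm b c)%g.
Proof.
move=> Hab Hac Hbc.
have E1 : (tperm a b * tperm b c * tperm a b)%g = (tperm b c ^ tperm a b)%g.
  by rewrite /conjg tpermV mulgA.
have E2 : (tperm b c * tperm a b * tperm b c)%g = (tperm a b ^ tperm b c)%g.
  by rewrite /conjg tpermV mulgA.
rewrite E1 E2 !tpermJ tpermR tpermL (tpermD Hac Hbc) tpermD //;
  by rewrite eq_sym.
Qed.

Lemma tperm_comm (T : finType) (a b c e : T) : a != c -> a != e -> b != c -> b != e ->
  (tperm a b * tperm c e)%g = (tperm c e * tperm a b)%g.
Proof.
move=> H1 H2 H3 H4.
have E : (tperm c e ^ tperm a b)%g = tperm c e.
  by rewrite tpermJ !tpermD // eq_sym.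
have := congr1 (mulg (tperm a b)) E; rewrite /conjg tpermV mulgA tperm2 mul1g => ->.
by [].
Qed.

Lemma red_rcons n w i (a b : 'I_n) : nat_of_ord a = i.-1 -> nat_of_ord b = i -> 0 < i ->
  word n w -> size (rcons w i) = inv (perm_of_word n (rcons w i)) ->
  size w = inv (perm_of_word n w) /\ perm_of_word n w a < perm_of_word n w b.
Proof.
move=> Ha Hb Hi0 Hw; rewrite perm_rcons (s_E Ha Hb) size_rcons.
have Hab : nat_of_ord b = (nat_of_ord a).+1 by lia.
have : nat_of_ord a != b by rewrite Hab; lia.
move/(perm_lt_or (perm_of_word n w)) => /orP[H|H].
  by rewrite inv_up // => /eqP; rewrite eqSS => /eqP.
rewrite (inv_down Hab H) => E.
have := inv_le Hw; rewrite (inv_down Hab H) -E => /ltnW.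
by rewrite ltnn.
Qed.

Lemma red_rcons_inv n w i (a b : 'I_n) : nat_of_ord a = i.-1 -> nat_of_ord b = i -> 0 < i ->
  size w = inv (perm_of_word n w) -> perm_of_word n w a < perm_of_word n w b ->
  size (rcons w i) = inv (perm_of_word n (rcons w i)).
Proof.
move=> Ha Hb Hi0 Hs H; rewrite perm_rcons (s_E Ha Hb) size_rcons inv_up ?Hs //.
lia.
Qed.

Lemma applyU_rcons (X : finType) (U : nat -> X -> X) w i m :
  applyU U (rcons w i) m = applyU U w (U i m).
Proof. by rewrite /applyU foldr_rcons. Qed.

Ltac neqo := apply/negP => /eqP/(congr1 (@nat_of_ord _)); lia.

Section Mats.
Variables (n : nat) (X : finType) (U : nat -> X -> X).
Hypothesis HU2 : forall i m, (0 < i < n) -> U i (U i m) = U i m.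
Hypothesis HUc : forall i j m, (0 < i < n) -> (0 < j < n) -> (i.+1 < j \/ j.+1 < i) ->
         U i (U j m) = U j (U i m).
Hypothesis HUb : forall i m, (0 < i) -> (i.+1 < n) ->
         U i (U i.+1 (U i m)) = U i.+1 (U i (U i.+1 m)).

Local Notation perm := (perm_of_word n).

Definition IHM k := forall a b, size a = k -> word n a -> word n b ->
  size a = inv (perm a) -> size b = inv (perm b) -> perm a = perm b ->
  forall m, applyU U a m = applyU U b m.

Lemma step_lt k (IH : IHM k) a' b' i j : i < j -> word n (rcons a' i) -> word n (rcons b' j) ->
  size a' = k -> size (rcons a' i) = inv (perm (rcons a' i)) ->
  size (rcons b' j) = inv (perm (rcons b' j)) -> perm (rcons a' i) = perm (rcons b' j) ->
  forall m, applyU U (rcons a' i) m = applyU U (rcons b' j) m.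
Proof.
move=> Hij Ha Hb Hk Hsa Hsb Hp m.
move: (Ha) (Hb); rewrite !word_rcons => /andP[Ha' Hi] /andP[Hb' Hj].
have [ai [bi [Hai Hbi]]] := ab_ex Hi.
have [aj [bj [Haj Hbj]]] := ab_ex Hj.
have Hi0 : 0 < i by case/andP: Hi.
have Hj0 : 0 < j by case/andP: Hj.
have [Hsa' Hda] := red_rcons Hai Hbi Hi0 Ha' Hsa.
have [Hsb' Hdb] := red_rcons Haj Hbj Hj0 Hb' Hsb.
have Habi : nat_of_ord bi = (nat_of_ord ai).+1 by lia.
have Habj : nat_of_ord bj = (nat_of_ord aj).+1 by lia.
set sg := perm (rcons a' i).
have Ea' : perm a' = (tperm ai bi * sg)%g.
  by rewrite /sg perm_rcons (s_E Hai Hbi) mulgA tperm2 mul1g.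
have Eb' : perm b' = (tperm aj bj * sg)%g.
  by rewrite /sg Hp perm_rcons (s_E Haj Hbj) mulgA tperm2 mul1g.
have Dsi : sg bi < sg ai by rewrite /sg perm_rcons (s_E Hai Hbi) !permM tpermR tpermL.
have Dsj : sg bj < sg aj by rewrite /sg Hp perm_rcons (s_E Haj Hbj) !permM tpermR tpermL.
have Hsb'k : size b' = k.
  by move: Hsb; rewrite -Hp -/sg size_rcons -Hsa size_rcons Hk => /eqP; rewrite eqSS => /eqP.
rewrite !applyU_rcons.
have [Ej|Nj] := eqVneq j i.+1.
-
  have Eab : aj = bi by apply: val_inj => /=; lia.
  have E1 := inv_down Habi Dsi.
  have D2 : (tperm ai bi * sg)%g bj < (tperm ai bi * sg)%g aj.
    rewrite !permM Eab tpermR tpermD; try neqo.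
    by apply: (ltn_trans Dsj); rewrite Eab.
  have E2 := inv_down Habj D2.
  have D3 : (tperm aj bj * (tperm ai bi * sg))%g bi < (tperm aj bj * (tperm ai bi * sg))%g ai.
    rewrite !permM -Eab tpermL (tpermD (x:=aj)); try neqo.
    by rewrite Eab tpermD; try neqo; rewrite tpermL -Eab.
  have E3 := inv_down Habi D3.
  set rho := (tperm ai bi * (tperm aj bj * (tperm ai bi * sg)))%g in E3.
  have [c [Hc Hpc Hsc]] := red_ex rho.
  have Pa : perm (rcons (rcons c i) j) = perm a'.
    rewrite !perm_rcons (s_E Hai Hbi) (s_E Haj Hbj) Hpc /rho Ea'.
    by rewrite !mulgA -(mulgA (tperm aj bj)) tperm2 mulg1 tperm2 mul1g.
  have Pb : perm (rcons (rcons c j) i) = perm b'.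
    rewrite !perm_rcons (s_E Hai Hbi) (s_E Haj Hbj) Hpc /rho Eb'.
    rewrite !mulgA -Eab tperm_braid; try neqo.
    by rewrite -(mulgA _ (tperm aj bj) (tperm aj bj)) tperm2 mulg1 -(mulgA _ (tperm ai aj) (tperm ai aj)) tperm2 mulg1.
  have W1 : word n (rcons (rcons c i) j) by rewrite !word_rcons Hc Hi Hj.
  have W2 : word n (rcons (rcons c j) i) by rewrite !word_rcons Hc Hi Hj.
  have S1 : size (rcons (rcons c i) j) = inv (perm (rcons (rcons c i) j)).
    rewrite Pa Ea' !size_rcons Hsc.
    move: E1 E2 E3; rewrite -Ea' => E1 E2 E3.
    by rewrite E2 E3.
  have S2 : size (rcons (rcons c j) i) = inv (perm (rcons (rcons c j) i)).
    rewrite Pb !size_rcons Hsc.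
    have : size b' = inv (perm a') by rewrite Hsb'k -Hk.
    rewrite Hsb' Ea' E2 E3 => ->.
    by [].
  rewrite (IH _ _ Hk Ha' W1 Hsa' S1 (esym Pa)).
  rewrite (IH _ _ Hsb'k Hb' W2 Hsb' S2 (esym Pb)).
  rewrite !applyU_rcons Ej HUb //.
  by rewrite -Ej; case/andP: Hj.
-
  have Hfar : i.+1 < j by rewrite ltn_neqAle eq_sym Nj Hij.
  have E1 := inv_down Habi Dsi.
  have D2 : (tperm ai bi * sg)%g bj < (tperm ai bi * sg)%g aj.
    by rewrite !permM !tpermD //; neqo.
  have E2 := inv_down Habj D2.
  set rho := (tperm aj bj * (tperm ai bi * sg))%g in E2.
  have [c [Hc Hpc Hsc]] := red_ex rho.
  have Pa : perm (rcons c j) = perm a'.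
    by rewrite !perm_rcons (s_E Haj Hbj) Hpc /rho Ea' mulgA tperm2 mul1g.
  have Pb : perm (rcons c i) = perm b'.
    rewrite !perm_rcons (s_E Hai Hbi) Hpc /rho Eb' mulgA tperm_comm; try neqo.
    by rewrite -mulgA (mulgA (tperm ai bi)) tperm2 mul1g.
  have W1 : word n (rcons c j) by rewrite !word_rcons Hc Hj.
  have W2 : word n (rcons c i) by rewrite !word_rcons Hc Hi.
  have S1 : size (rcons c j) = inv (perm (rcons c j)).
    by rewrite Pa !size_rcons Hsc Ea' E2.
  have S2 : size (rcons c i) = inv (perm (rcons c i)).
    rewrite Pb !size_rcons Hsc.
    have : size b' = inv (perm a') by rewrite Hsb'k -Hk.
    by rewrite Hsb' Ea' E2 => ->.
  rewrite (IH _ _ Hk Ha' W1 Hsa' S1 (esym Pa)).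
  rewrite (IH _ _ Hsb'k Hb' W2 Hsb' S2 (esym Pb)).
  rewrite !applyU_rcons HUc //; lia.
Qed.

Lemma matsumoto : forall k, IHM k.
Proof.
elim=> [|k IH] a b Hk Ha Hb Hsa Hsb Hp m.
  move: Hsb; rewrite -Hp -Hsa Hk => /eqP; rewrite size_eq0 => /eqP ->.
  by move/eqP: Hk; rewrite size_eq0 => /eqP ->.
case/lastP: a Hk Ha Hsa Hp => [//|a' i] Hk Ha Hsa Hp.
have : size b = k.+1 by rewrite Hsb -Hp -Hsa.
case/lastP: b Hb Hsb Hp => [//|b' j] Hb Hsb Hp _.
have Hk' : size a' = k by move: Hk; rewrite size_rcons => /eqP; rewrite eqSS => /eqP.
case: (ltngtP i j) => Hij.
- exact: (step_lt IH Hij Ha Hb Hk' Hsa Hsb Hp).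
- have Hk'' : size b' = k.
    by move: Hsb; rewrite -Hp -Hsa !size_rcons Hk' => /eqP; rewrite eqSS => /eqP.
  by symmetry; apply: (step_lt IH Hij Hb Ha Hk'' Hsb Hsa (esym Hp)).
- subst j.
  move: (Ha) (Hb); rewrite !word_rcons => /andP[Ha' Hi] /andP[Hb' _].
  have [ai [bi [Hai Hbi]]] := ab_ex Hi.
  have Hi0 : 0 < i by case/andP: Hi.
  have [Hsa' _] := red_rcons Hai Hbi Hi0 Ha' Hsa.
  have [Hsb' _] := red_rcons Hai Hbi Hi0 Hb' Hsb.
  have Pe : perm a' = perm b'.
    move: Hp; rewrite !perm_rcons => /(congr1 (mulg (s_ n i))).
    by rewrite !mulgA (s_E Hai Hbi) tperm2 !mul1g.
  rewrite !applyU_rcons; apply: (IH _ _ Hk' Ha' Hb' Hsa' Hsb' Pe).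
Qed.

End Mats.

Lemma restless_rcons (X : finType) (U : nat -> X -> X) w i m m' :
  restless U (rcons w i) m m' = (U i m != m) && restless U w (U i m) m'.
Proof. by rewrite /restless rev_rcons. Qed.

Lemma restless_apply (X : finType) (U : nat -> X -> X) w m m' :
  restless U w m m' -> applyU U w m = m'.
Proof.
elim/last_ind: w m => [|w i IH] m; first by rewrite /restless /= => /eqP.
by rewrite restless_rcons applyU_rcons => /andP[_ /IH].
Qed.

Lemma prune (X : finType) (U : nat -> X -> X) n w m m' :
  word n w -> applyU U w m = m' ->
  exists z, [/\ word n z, restless U z m m', size z <= size w &
                (~~ restless U w m m' -> size z < size w)].
Proof.
elim/last_ind: w m => [|w i IH] m.
  move=> _ <-; exists [::]; split => //; by rewrite /restless /= eqxx.
rewrite word_rcons applyU_rcons => /andP[Hw Hi] Hap.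
have [E|N] := eqVneq (U i m) m.
  rewrite E in Hap.
  have [z [Hz Hr Hs _]] := IH m Hw Hap.
  exists z; split => //; rewrite size_rcons; first by apply: leqW.
  by move=> _; rewrite ltnS.
have [z [Hz Hr Hs Hs']] := IH (U i m) Hw Hap.
exists (rcons z i); split.
- by rewrite word_rcons Hz Hi.
- by rewrite restless_rcons N Hr.
- by rewrite !size_rcons ltnS.
- by rewrite restless_rcons N /= !size_rcons ltnS => /Hs'.
Qed.

Lemma applyU_cat (X : finType) (U : nat -> X -> X) v w m :
  applyU U (v ++ w) m = applyU U v (applyU U w m).
Proof. by rewrite /applyU foldr_cat. Qed.

Section Poset.
Import Order.TTheory.
Variables (d : Order.disp_t) (P : finTBPOrderType d) (n : nat) (rk : P -> nat).
Hypothesis Hgr : graded rk n.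

Lemma rk_lt : forall x y : P, (x < y)%O -> rk x < rk y.
Proof.
case: Hgr => _ _ Hc.
suff H : forall k (x y : P), #|[set z | (x < z)%O && (z < y)%O]| <= k -> (x < y)%O -> rk x < rk y.
  by move=> x y; apply: H (leqnn _).
elim=> [|k IH] x y Hk Hxy.
- have Hcov : covers x y.
    rewrite /covers Hxy /=; apply/forallP => z; apply/negP => Hz.
    have : z \in [set z | (x < z)%O && (z < y)%O] by rewrite inE.
    by move: Hk; rewrite leqn0 cards_eq0 => /eqP ->; rewrite inE.
  by rewrite (Hc _ _ Hcov).
- have [E|[z]] := set_0Vmem [set z | (x < z)%O && (z < y)%O].
    apply: (IH x y) => //; by rewrite E cards0.
  rewrite inE => /andP[Hxz Hzy].
  have H1 : #|[set w | (x < w)%O && (w < z)%O]| <= k.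
    rewrite -ltnS; apply: leq_trans Hk; apply: proper_card.
    apply/properP; split.
      apply/subsetP => w; rewrite !inE => /andP[-> /= Hwz]; exact: lt_trans Hwz Hzy.
    by exists z; rewrite !inE ?Hxz ?Hzy // ltxx andbF.
  have H2 : #|[set w | (z < w)%O && (w < y)%O]| <= k.
    rewrite -ltnS; apply: leq_trans Hk; apply: proper_card.
    apply/properP; split.
      apply/subsetP => w; rewrite !inE => /andP[Hzw ->]; rewrite andbT; exact: lt_trans Hxz Hzw.
    by exists z; rewrite !inE ?Hxz ?Hzy // ltxx.
  exact: ltn_trans (IH _ _ H1 Hxz) (IH _ _ H2 Hzy).
Qed.

Lemma flagF0 : flagF rk n set0 = 1%R.
Proof.
case: (Hgr) => Hb Ht _.
rewrite /flagF sum_ffunE.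
under eq_bigr do rewrite ffunE.
set C0 := [set (\bot%O : P); \top%O].
have HC0 : [&& is_chain C0, (\bot%O \in C0) & (\top%O \in C0)].
  rewrite !inE !eqxx orbT /= andbT; apply/forallP => x; apply/implyP => Hx.
  apply/forallP => y; apply/implyP; rewrite !inE => /orP[] /eqP ->.
    by rewrite le0x orbT.
  by rewrite lex1.
have R0 : rankset rk n C0 = set0.
  apply/setP => k; rewrite !inE; apply/negbTE/negP => /fintype.existsP[x /andP[]].
  rewrite !inE => /orP[] /eqP -> /eqP; rewrite ?Hb ?Ht //.
  have := ltn_ord k; lia.
rewrite (bigD1 C0) //= R0 eqxx big1 ?GRing.addr0 //.
move=> C /andP[/and3P[Hch Hbot Htop] NC].
case: eqP => // R; exfalso; move/eqP: NC; apply.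
apply/setP => x; rewrite !inE.
apply/idP/idP; last by case/orP => /eqP ->.
move=> Hx; apply/negPn/negP; rewrite negb_or => /andP[Nb Nt].
have Hbx : (\bot < x)%O by rewrite lt_def Nb le0x.
have Hxt : (x < \top)%O by rewrite lt_def eq_sym Nt lex1.
have := rk_lt Hbx; have := rk_lt Hxt; rewrite Hb Ht => H1 H2.
have Hk : (rk x).-1 < n.-1 by lia.
have : Ordinal Hk \in rankset rk n C by rewrite inE; apply/fintype.existsP; exists x; rewrite Hx /=; apply/eqP; lia.
by rewrite R inE.
Qed.
End Poset.

Lemma prod_sign (W : seq nat) (F : nat -> int) :
  (forall i, i \in W -> F i = (-1)%R) -> (\prod_(i <- W) F i)%R = ((-1) ^+ size W)%R.
Proof.
elim: W => [|x W IH] H; first by rewrite big_nil.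
rewrite big_cons IH ?H ?mem_head //= ?GRing.exprS // => i Hi.
by apply: H; rewrite in_cons Hi orbT.
Qed.

Section Main.
Import Order.TTheory.
Variables (d : Order.disp_t) (P : finTBPOrderType d) (n : nat) (rk : P -> nat).
Hypothesis Hgr : graded rk n.
Variable U : nat -> mchain P -> mchain P.
Hypothesis Hgood : good_action rk n U.
Variable m0 : mchain P.
Hypothesis Hm0 : forall i, (0 < i < n)%N -> U i m0 = m0.
Variable omega : mchain P -> 'S_n.
Hypothesis Homega : forall m w, word n w -> restless U w m m0 -> omega m = perm_of_word n w.

Lemma matsU a b : word n a -> word n b -> size a = inv (perm_of_word n a) ->
  size b = inv (perm_of_word n b) -> perm_of_word n a = perm_of_word n b ->
  forall m, applyU U a m = applyU U b m.
Proof.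
case: Hgood => _ _ HUc HUb _.
exact: (matsumoto HUc HUb erefl).
Qed.

Definition sg0 : 'S_n := perm (@rev_ord_inj n).

Lemma absorb R : word n R -> perm_of_word n R = sg0 -> size R = inv sg0 ->
  forall i m, 0 < i < n -> applyU U R (U i m) = applyU U R m.
Proof.
move=> HR HpR HsR i m Hi.
case: Hgood => _ HU2 _ _ _.
have [a [b [Ha Hb]]] := ab_ex Hi.
have Hab : nat_of_ord b = (nat_of_ord a).+1 by lia.
have D : sg0 b < sg0 a by rewrite !permE /= Hab; have := ltn_ord b; lia.
have E := inv_down Hab D.
have [r [Hr Hpr Hsr]] := red_ex (tperm a b * sg0)%g.
have W1 : word n (rcons r i) by rewrite word_rcons Hr Hi.
have P1 : perm_of_word n (rcons r i) = perm_of_word n R.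
  by rewrite perm_rcons (s_E Ha Hb) Hpr mulgA tperm2 mul1g HpR.
have S1 : size (rcons r i) = inv (perm_of_word n (rcons r i)).
  by rewrite P1 HpR size_rcons Hsr E.
have SR : size R = inv (perm_of_word n R) by rewrite HpR.
rewrite !(matsU HR W1 SR S1 (esym P1)).
by rewrite !applyU_rcons HU2.
Qed.

Lemma applyU_m0 v : word n v -> applyU U v m0 = m0.
Proof.
elim: v => [|j v IH] //=; rewrite /word /= => /andP[Hj Hv].
by rewrite -/(applyU U v m0) IH // Hm0.
Qed.

Lemma F1 m : exists w, word n w /\ restless U w m m0.
Proof.
case: Hgood => _ HU2 _ _ [b [Hfl Hcw]].
have [R [HR HpR HsR]] := red_ex sg0.
pose L := iota 1 n.-1.
have HL : word n L.
  by apply/allP => i; rewrite mem_iota => /andP[H1 H2]; apply/andP; split => //; lia.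
pose W := L ++ R.
have HW : word n W by rewrite /word all_cat; apply/andP; split.
have Hidem : forall v x, word n v -> applyU U W (applyU U v x) = applyU U W x.
  elim=> [|j v IH] x //=; rewrite /word /= => /andP[Hj Hv].
  rewrite -/(applyU U v x) /W !applyU_cat (absorb HR HpR HsR) //.
  by have := IH x Hv; rewrite /W !applyU_cat.
have b0 : b set0 = 1%R.
  have := Hfl set0; rewrite flagF0 // (bigD1 set0) //= big1 ?GRing.addr0.
    by rewrite /Lq ffunE sub0set GRing.mulr1 => ->.
  by move=> S NS; rewrite /Lq ffunE subset0 (negbTE NS) GRing.mulr0.
have Hc := Hcw W HW.
rewrite (bigD1 set0) //= big1 ?GRing.addr0 in Hc; last first.
  move=> S NS; apply/eqP; rewrite GRing.mulf_eq0; apply/orP; right.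
  rewrite /chi GRing.prodf_seq_eq0; apply/hasP.
  have [k Hk] := set0Pn _ NS.
  exists k.+1.
    rewrite mem_cat; apply/orP; left; rewrite mem_iota; have := ltn_ord k; lia.
  rewrite /=; case: ifP => // /fintype.existsP[k' /andP[Hk' /eqP E]].
  have : k' = k by apply: val_inj; case: E.
  by move=> Ekk; rewrite Ekk inE Hk in Hk'.
rewrite b0 GRing.mul1r /chi (prod_sign (W := W)) in Hc; last first.
  move=> i Hi; have := allP HW i Hi => /andP[H1 H2].
  have Hk : i.-1 < n.-1 by lia.
  rewrite ifT //; apply/fintype.existsP; exists (Ordinal Hk); rewrite setC0 inE /=; apply/eqP; lia.
rewrite /charP -[RHS]GRing.mulr1 in Hc.
have Hc' := can_inj (GRing.signrMK (size W)) Hc.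
have Hcard : #|[set x | applyU U W x == x]| = 1 by case: Hc'.
have [x Ex] := cards1P (introT eqP Hcard).
have Hm0in : m0 \in [set x | applyU U W x == x] by rewrite inE applyU_m0.
have Hmin : applyU U W m \in [set x | applyU U W x == x] by rewrite inE Hidem.
rewrite Ex !inE in Hm0in Hmin.
have Ew : applyU U W m = m0 by rewrite (eqP Hm0in) (eqP Hmin).
have [z [Hz Hr _ _]] := prune HW Ew.
by exists z.
Qed.


Lemma restless_red L : forall w m, size w <= L -> word n w -> restless U w m m0 ->
  size w = inv (perm_of_word n w).
Proof.
case: Hgood => _ HU2 _ _ _.
elim: L => [|L IH] w m.
  by rewrite leqn0 size_eq0 => /eqP -> _ _; rewrite /perm_of_word /= inv1.
case/lastP: w => [|x i].
  by move=> _ _ _; rewrite /perm_of_word /= inv1.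
rewrite word_rcons restless_rcons => Hs0 /andP[Hx Hi] /andP[Nm Hr].
have Hs : size x <= L by move: Hs0; rewrite size_rcons ltnS.
have Hsx := IH x (U i m) Hs Hx Hr.
have [a [b [Ha Hb]]] := ab_ex Hi.
have Hi0 : 0 < i by case/andP: Hi.
have Hab : nat_of_ord b = (nat_of_ord a).+1 by lia.
have : nat_of_ord a != b by rewrite Hab; lia.
move/(perm_lt_or (perm_of_word n x)) => /orP[H|H].
  exact: red_rcons_inv Ha Hb Hi0 Hsx H.
exfalso.
have E := inv_down Hab H.
have [r [Hr' Hpr Hsr]] := red_ex (tperm a b * perm_of_word n x)%g.
have W1 : word n (rcons r i) by rewrite word_rcons Hr' Hi.
have P1 : perm_of_word n (rcons r i) = perm_of_word n x.
  by rewrite perm_rcons (s_E Ha Hb) Hpr mulgA tperm2 mul1g.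
have S1 : size (rcons r i) = inv (perm_of_word n (rcons r i)).
  by rewrite P1 size_rcons Hsr E.
have Ap : applyU U r (U i m) = m0.
  have := restless_apply Hr.
  rewrite (matsU Hx W1 Hsx S1 (esym P1)) applyU_rcons HU2 //.
have [z [Hz Hrz Hsz _]] := prune Hr' Ap.
have Hzx : size z < size x by rewrite Hsx E -Hsr ltnS.
have Hsz' := IH z (U i m) (leq_trans (ltnW Hzx) Hs) Hz Hrz.
have := Homega Hz Hrz; rewrite (Homega Hx Hr) => Ep.
by move: Hzx; rewrite Hsz' -Ep -Hsx ltnn.
Qed.

Lemma restless_red' w m : word n w -> restless U w m m0 -> size w = inv (perm_of_word n w).
Proof. exact: (@restless_red (size w) w m (leqnn _)). Qed.

Lemma reducedP w : reduced n w <-> word n w /\ size w = inv (perm_of_word n w).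
Proof.
split.
  case=> Hw Hmin; split => //.
  have [w' [Hw' Hp Hs]] := red_ex (perm_of_word n w).
  apply/eqP; rewrite eqn_leq inv_le // andbT -Hs; exact: Hmin.
case=> Hw Hs; split => // w' Hw' Hp.
by rewrite Hs -Hp inv_le.
Qed.

Lemma partA2 m w : reduced n w -> perm_of_word n w = omega m -> restless U w m m0.
Proof.
move=> /reducedP [Hw Hs] Hp.
have [v [Hv Hr]] := F1 m.
have Hsv := restless_red' Hv Hr.
have Pv := Homega Hv Hr.
have Ap : applyU U w m = m0.
  rewrite (matsU Hw Hv Hs Hsv); first exact: restless_apply.
  by rewrite Hp Pv.
have [z [Hz Hrz Hsz Hlt]] := prune Hw Ap.
apply/negPn/negP => /Hlt Hzw.
have := restless_red' Hz Hrz; rewrite -(Homega Hz Hrz) -Hp -Hs => E.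
by move: Hzw; rewrite E ltnn.
Qed.

Lemma main_all :
  (forall m w, word n w -> restless U w m m0 ->
     reduced n w /\ perm_of_word n w = omega m) /\
  (forall m w, reduced n w -> perm_of_word n w = omega m -> restless U w m m0) /\
  (forall m i, (0 < i < n)%N ->
     (descent (omega m) i = (U i m != m)) /\
     (U i m != m -> omega (U i m) = (s_ n i * omega m)%g)).
Proof.
split; [|split].
- move=> m w Hw Hr; split; last by rewrite (Homega Hw Hr).
  by apply/reducedP; split => //; apply: restless_red' Hr.
- exact: partA2.
move=> m i Hi.
case: Hgood => _ HU2 _ _ _.
have [a [b [Ha Hb]]] := ab_ex Hi.
have Hi0 : 0 < i by case/andP: Hi.
have Hab : nat_of_ord b = (nat_of_ord a).+1 by lia.
rewrite (descentE _ Ha Hb).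
have [E|N] := eqVneq (U i m) m; last first.
  have [x [Hx Hr]] := F1 (U i m).
  have W1 : word n (rcons x i) by rewrite word_rcons Hx Hi.
  have R1 : restless U (rcons x i) m m0 by rewrite restless_rcons N Hr.
  have Ho := Homega W1 R1.
  have [_ D] := red_rcons Ha Hb Hi0 Hx (restless_red' W1 R1).
  split.
    by rewrite Ho perm_rcons (s_E Ha Hb) !permM tpermL tpermR D.
  move=> _; rewrite (Homega Hx Hr) Ho perm_rcons (s_E Ha Hb).
  by rewrite mulgA tperm2 mul1g.
split => //.
apply/negbTE/negP => D.
have E1 := inv_down Hab D.
have [r [Hr' Hpr Hsr]] := red_ex (tperm a b * omega m)%g.
have W1 : word n (rcons r i) by rewrite word_rcons Hr' Hi.
have P1 : perm_of_word n (rcons r i) = omega m.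
  by rewrite perm_rcons (s_E Ha Hb) Hpr mulgA tperm2 mul1g.
have S1 : size (rcons r i) = inv (perm_of_word n (rcons r i)).
  by rewrite P1 size_rcons Hsr E1.
have := partA2 (proj2 (reducedP _) (conj W1 S1)) P1.
by rewrite restless_rcons E eqxx.
Qed.

End Main.

Theorem mainTheorem13 (d : Order.disp_t) (P : finTBPOrderType d) (n : nat)
  (rk : P -> nat) (Hgr : graded rk n) (Hbt : bowtie_free P)
  (U : nat -> mchain P -> mchain P) (Hgood : good_action rk n U)
  (m0 : mchain P) (Hm0 : forall i, (0 < i < n)%N -> U i m0 = m0)
  (omega : mchain P -> 'S_n)
  (Homega : forall m w, word n w -> restless U w m m0 -> omega m = perm_of_word n w) :
  (forall m w, word n w -> restless U w m m0 ->
     reduced n w /\ perm_of_word n w = omega m) /\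
  (forall m w, reduced n w -> perm_of_word n w = omega m -> restless U w m m0) /\
  (forall m i, (0 < i < n)%N ->
     (descent (omega m) i = (U i m != m)) /\
     (U i m != m -> omega (U i m) = (s_ n i * omega m)%g)).
Proof.
exact: (main_all Hgr Hgood Hm0 Homega).
Qed.
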